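(* Let $G=(V,D,B)$ be a mixed graph, $v\in V$, and suppose $W\subseteq V$ satisfies the weak half-trek criterion with respect to $v$. Then there exists a set $Y\subseteq V$ satisfying the half-trek criterion with respect to $v$ such that $Y\cap\mathrm{htr}(v)=W\cap\mathrm{htr}(v)$.
   Context: A mixed graph is $G=(V,D,B)$ with $V=[m]$, $D\subseteq V\times V$ directed edges $v\to w$, $B$ symmetric set of bidirected edges $v\leftrightarrow w$, no self-loops. $\mathrm{pa}(v)=\{w:w\to v\in D\}$, $\mathrm{sib}(v)=\{w:w\leftrightarrow v\in B\}$. A path is a sequence of edges of $D\cup B$ connecting consecutive nodes (not necessarily simple; directed edges may be traversed either way). A trek from $v$ to $w$ is a path of the form $v=v^L_l\leftarrow\cdots\leftarrow v^L_0\leftrightarrow v^R_0\to\cdots\to v^R_r=w$ with $\mathrm{Left}=\{v^L_0,\dots,v^L_l\}$, $\mathrm{Right}=\{v^R_0,\dots,v^R_r\}$, or $v=v^L_l\leftarrow\cdots\leftarrow v^L_1\leftarrow v^T\to v^R_1\to\cdots\to v^R_r=w$ ($l,r\ge0$) with $\mathrm{Left}=\{v^T,v^L_1,\dots,v^L_l\}$, $\mathrm{Right}=\{v^T,v^R_1,\dots,v^R_r\}$. A half-trek is a trek with $|\mathrm{Left}|=1$. A system of treks from $X$ to $Y$ is a set of treks with distinct sources forming $X$ and distinct targets forming $Y$; it has no sided intersection if the Left sets are pairwise disjoint and the Right sets are pairwise disjoint. $\mathrm{htr}(v)$ is the set of $w\in V\setminus(\{v\}\cup\mathrm{sib}(v))$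 reachable from $v$ by a half-trek. $Y$ satisfies the half-trek criterion w.r.t. $v$ if (i) $|Y|=|\mathrm{pa}(v)|$, (ii) $Y\cap(\{v\}\cup\mathrm{sib}(v))=\emptyset$, (iii) there is a system of half-treks with no sided intersection from $Y$ to $\mathrm{pa}(v)$. $Y$ satisfies the weak half-trek criterion w.r.t. $v$ if (i) and (ii) hold and (iii') there is a system of treks with no sided intersection from $Y$ to $\mathrm{pa}(v)$ in which, for every $w\in Y\cap\mathrm{htr}(v)$, the trek with source $w$ is a half-trek. *)

(* Defs.v *)
From mathcomp Require Import all_boot.
From Stdlib Require Lists.List.
Set Implicit Arguments.
Unset Strict Implicit.
Unset Printing Implicit Defensive.

(* A mixed graph on V = 'I_m: directed edges D (D w v means w -> v),
   symmetric bidirected edges B, no self-loops. *)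
Record mixed_graph (m : nat) := MixedGraph {
  Dir : rel 'I_m;
  Bid : rel 'I_m;
  Bid_sym : forall v w, Bid v w = Bid w v;
  Dir_irrefl : forall v, ~~ Dir v v;
  Bid_irrefl : forall v, ~~ Bid v v
}.

Section Treks.
Variables (m : nat) (G : mixed_graph m).
Local Notation V := 'I_m.

Definition pa (v : V) : {set V} := [set w | Dir G w v].
Definition sib (v : V) : {set V} := [set w | Bid G w v].

(* A trek, given by its node sequences.
   - TBi l0 ls r0 rs : v = last l0 ls <- ... <- l0 <-> r0 -> ... -> last r0 rs
     (ls = [v^L_1; ...; v^L_l], rs = [v^R_1; ...; v^R_r]);
   - TTop t ls rs : last t ls <- ... <- t -> ... -> last t rs. *)
Inductive trek : Type :=
  | TBi of V & seq V & V & seq V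
  | TTop of V & seq V & seq V.

Definition is_trek (tr : trek) : bool :=
  match tr with
  | TBi l0 ls r0 rs => [&& Bid G l0 r0, path (Dir G) l0 ls & path (Dir G) r0 rs]
  | TTop t ls rs => path (Dir G) t ls && path (Dir G) t rs
  end.

Definition trek_source (tr : trek) : V :=
  match tr with TBi l0 ls _ _ => last l0 ls | TTop t ls _ => last t ls end.

Definition trek_target (tr : trek) : V :=
  match tr with TBi _ _ r0 rs => last r0 rs | TTop t _ rs => last t rs end.

Definition Left (tr : trek) : {set V} :=
  match tr with TBi l0 ls _ _ => [set x in l0 :: ls] | TTop t ls _ => [set x in t :: ls] end.

Definition Right (tr : trek) : {set V} :=
  match tr with TBi _ _ r0 rs => [set x in r0 :: rs] | TTop t _ rs => [set x in t :: rs] end.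

Definition is_half_trek (tr : trek) : bool := is_trek tr && (#|Left tr| == 1).

Definition htr (v w : V) : Prop :=
  w \notin v |: sib v /\
  exists tr, [/\ is_half_trek tr, trek_source tr = v & trek_target tr = w].

Definition trek_system (ts : seq trek) (X Y : {set V}) : Prop :=
  [/\ all is_trek ts,
      uniq (map trek_source ts), [set x in map trek_source ts] = X,
      uniq (map trek_target ts) & [set x in map trek_target ts] = Y].

Definition no_sided_intersection (ts : seq trek) : bool :=
  pairwise (fun a b => [disjoint Left a & Left b] && [disjoint Right a & Right b]) ts.

Definition HTC (Y : {set V}) (v : V) : Prop :=
  [/\ #|Y| = #|pa v|,
      [disjoint Y & v |: sib v] &
      exists ts, [/\ trek_system ts Y (pa v), all is_half_trek ts
                   & no_sided_intersection ts]].

Definition weak_HTC (Y : {set V}) (v : V) : Prop :=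
  [/\ #|Y| = #|pa v|,
      [disjoint Y & v |: sib v] &
      exists ts, [/\ trek_system ts Y (pa v), no_sided_intersection ts
                   & forall tr, Stdlib.Lists.List.In tr ts ->
                       htr v (trek_source tr) -> is_half_trek tr]].
End Treks.

(* Main.v *)
Require Import Defs.
From mathcomp Require Import all_boot.
From Stdlib Require Lists.List.

Set Implicit Arguments.
Unset Strict Implicit.
Unset Printing Implicit Defensive.

Definition ttop m (tr : trek m) : 'I_m :=
  match tr with TBi l0 _ _ _ => l0 | TTop t _ _ => t end.
Definition tlft m (tr : trek m) : seq 'I_m :=
  match tr with TBi _ ls _ _ => ls | TTop _ ls _ => ls end.
Definition hfy m (tr : trek m) : trek m :=
  match tr with TBi l0 _ r0 rs => TBi l0 [::] r0 rs | TTop t _ rs => TTop t [::] rs end.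

Definition htrek m (G : mixed_graph m) (v y : 'I_m) :=
  exists tr, [/\ is_half_trek G tr, trek_source tr = v & trek_target tr = y].

Lemma set_single m (x : 'I_m) : [set y in [:: x]] = [set x].
Proof. by apply/setP => y; rewrite !inE. Qed.

Lemma src_lft m (G : mixed_graph m) tr :
  is_trek G tr -> path (Dir G) (ttop tr) (tlft tr) /\ trek_source tr = last (ttop tr) (tlft tr).
Proof. by case: tr => [l0 ls r0 rs|t ls rs] /= => [/and3P[]|/andP[]]. Qed.

Lemma hfy_half m (G : mixed_graph m) tr : is_trek G tr -> is_half_trek G (hfy tr).
Proof.
case: tr => [l0 ls r0 rs|t ls rs] /= => [/and3P[h1 h2 h3]|/andP[h1 h2]];
  rewrite /is_half_trek /= set_single cards1 ?h1 ?h3 ?h2 //.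
Qed.

Lemma top_in m (tr : trek m) : ttop tr \in Left tr.
Proof. by case: tr => [l0 ls r0 rs|t ls rs]; rewrite /= inE mem_head. Qed.

Lemma half_src m (G : mixed_graph m) tr : is_half_trek G tr -> trek_source tr = ttop tr.
Proof.
case/andP => _ /cards1P [x hx].
have h1 : trek_source tr \in Left tr.
  by case: tr hx => [l0 ls r0 rs|t ls rs] _; rewrite /= inE mem_last.
have h2 := top_in tr.
by rewrite hx !inE in h1 h2; rewrite (eqP h1) (eqP h2).
Qed.

Lemma htrek_ext m (G : mixed_graph m) v y ls :
  htrek G v y -> path (Dir G) y ls -> htrek G v (last y ls).
Proof.
move=> [[l0 ls0 r0 rs|t ls0 rs] [/andP[ht hc] hs <-]] hp.
- exists (TBi l0 ls0 r0 (rs ++ ls)); split => //=; last by rewrite last_cat.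
  rewrite /is_half_trek hc andbT /=; move: ht => /= /and3P[h1 h2 h3].
  by rewrite h1 h2 cat_path h3 hp.
- exists (TTop t ls0 (rs ++ ls)); split => //=; last by rewrite last_cat.
  rewrite /is_half_trek hc andbT /=; move: ht => /= /andP[h1 h2].
  by rewrite h1 cat_path h2 hp.
Qed.

Lemma htrek_base m (G : mixed_graph m) v y : y \in v |: sib G v -> htrek G v y.
Proof.
rewrite !inE => /orP[/eqP->|hb].
- exists (TTop v [::] [::]); split => //.
  by rewrite /is_half_trek /= set_single cards1.
- exists (TBi v [::] y [::]); split => //.
  by rewrite /is_half_trek /= set_single cards1 Bid_sym hb.
Qed.

Lemma disjP (T : finType) (A B : {set T}) :
  reflect (forall x, x \in A -> x \in B -> False) [disjoint A & B].
Proof.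
apply: (iffP idP) => [h x hA hB | h]; first by rewrite (disjointFr h hA) in hB.
rewrite disjoint_subset; apply/subsetP => x hA; rewrite inE /=; apply/negP; exact: h.
Qed.

Lemma in_map_In T m (f : T -> 'I_m) s y :
  y \in map f s -> exists x, List.In x s /\ y = f x.
Proof.
elim: s => //= a s IH; rewrite inE => /orP[/eqP->|/IH [x [h1 h2]]].
- by exists a; split; [left|].
- by exists x; split; [right|].
Qed.

Lemma In_map T m (f : T -> 'I_m) s x : List.In x s -> f x \in map f s.
Proof.
elim: s => //= a s IH [->|h]; rewrite inE ?eqxx //.
by rewrite IH ?orbT.
Qed.

Lemma all_In T (p : pred T) s x : all p s -> List.In x s -> p x.
Proof. elim: s => //= a s IH /andP[h1 h2] [<-|h] //; exact: IH. Qed.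

Lemma uniq_top m (ts : seq (trek m)) : no_sided_intersection ts -> uniq (map (@ttop m) ts).
Proof.
elim: ts => //= a s IH; rewrite /no_sided_intersection /= => /andP[ha hs].
rewrite IH // andbT; apply/negP => /in_map_In [b [hb he]].
have /andP[hd _] := all_In ha hb.
by move/disjP: hd; apply; [exact: top_in|rewrite he; exact: top_in].
Qed.

Lemma nsi_hfy m (ts : seq (trek m)) : no_sided_intersection ts ->
  no_sided_intersection (map (@hfy m) ts).
Proof.
rewrite /no_sided_intersection pairwise_map; apply: sub_pairwise => a b /andP[h1 h2].
have hL : forall tr : trek m, Left (hfy tr) \subset Left tr.
  by case => [l0 ls r0 rs|t ls rs]; apply/subsetP => x; rewrite /= !inE => ->.
have hR : forall tr : trek m, Right (hfy tr) = Right tr.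
  by case.
rewrite /= !hR h2 andbT.
exact: (disjointWl (hL a) (disjointWr (hL b) h1)).
Qed.

Lemma map_src_hfy m (ts : seq (trek m)) : [seq trek_source i | i <- [seq hfy i | i <- ts]] = [seq ttop i | i <- ts].
Proof. by elim: ts => //= a s ->; case: a. Qed.

Lemma map_tgt_hfy m (ts : seq (trek m)) : [seq trek_target i | i <- [seq hfy i | i <- ts]] = [seq trek_target i | i <- ts].
Proof. by elim: ts => //= a s ->; case: a. Qed.

Theorem mainTheorem5 (m : nat) (G : mixed_graph m) (v : 'I_m) (W : {set 'I_m}) :
  weak_HTC G W v ->
  exists Y : {set 'I_m},
    HTC G Y v /\ (forall w, (w \in Y /\ htr G v w) <-> (w \in W /\ htr G v w)).
Proof.
move=> [hcard hdisj [ts [[hall huS hS huT hT] hnsi hhalf]]].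
have hWn : forall w, w \in W -> w \notin v |: sib G v.
  by move=> w hw; apply/negP => hb; move/disjP: hdisj => /(_ w hw hb).
have key : forall tr, List.In tr ts -> htrek G v (ttop tr) ->
    trek_source tr = ttop tr.
  move=> tr hin hh.
  case hht: (is_half_trek G tr); first exact: (half_src hht).
  have [hp hsrc] := src_lft (all_In hall hin).
  have hsW : trek_source tr \in W by rewrite -hS inE; exact: In_map.
  suff: false by []; move: (hhalf tr hin); rewrite hht; apply.
  split; first exact: hWn.
  by rewrite hsrc; exact: htrek_ext.
have htopW : forall tr, List.In tr ts -> htrek G v (ttop tr) -> ttop tr \in W.
  by move=> tr hin hh; rewrite -(key _ hin hh) -hS inE; exact: In_map.
exists [set x in map (@ttop m) ts]; split.
- split.
  + rewrite cardsE (card_uniqP (uniq_top hnsi)) size_map -hT cardsE.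
    by rewrite (card_uniqP huT) size_map.
  + apply/disjP => x; rewrite inE => /in_map_In [tr [hin ->]] hb.
    have := hWn _ (htopW _ hin (htrek_base hb)); by rewrite hb.
  + exists (map (@hfy m) ts); split.
    * split.
      -- rewrite all_map; apply: sub_all hall => tr /hfy_half /andP[] //.
      -- rewrite map_src_hfy; exact: uniq_top.
      -- by rewrite map_src_hfy.
      -- by rewrite map_tgt_hfy.
      -- by rewrite map_tgt_hfy.
    * rewrite all_map; apply: sub_all hall => tr; exact: hfy_half.
    * exact: nsi_hfy.
- move=> w; split => -[hw hh].
  + split => //; move: hw; rewrite inE => /in_map_In [tr [hin hw']].
    rewrite hw'; apply: htopW => //; rewrite -hw'.
    by case: hh => _ [t [h1 h2 h3]]; exists t; split.
  + split => //; move: hw; rewrite -hS inE => /in_map_In [tr [hin he]].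
    have hhl : is_half_trek G tr by apply: hhalf => //; rewrite -he.
    by rewrite inE he (half_src hhl); exact: In_map.
Qed.
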